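(* Let $G$ be a graph with maximum degree $d\ge1$ and let $E$ be a finite subset of the edges of $G$. Then there is an ordering $e_1,e_2,\dots,e_{|E|}$ of the elements of $E$ such that the number of disconnected edges in this ordering is at least $\lfloor |E|/(2d)\rfloor$, where an edge $e_j$ is called disconnected if it shares no vertex with any of the edges $e_1,\dots,e_{j-1}$. *)

(* Defs.v *)
(* An edge {u,v} is represented by an (oriented) pair (u, v) with adj u v;
   (u,v) and (v,u) represent the same edge. *)
From mathcomp Require Import all_boot.
Set Implicit Arguments. Unset Strict Implicit. Unset Printing Implicit Defensive.

Section Defs.
Variable V : eqType.

Definition same_edge (e f : V * V) : bool :=
  (e == f) || (e == (f.2, f.1)).

Definition shares (e f : V * V) : bool :=
  [|| e.1 == f.1, e.1 == f.2, e.2 == f.1 | e.2 == f.2].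

Fixpoint ndisc_aux (pre s : seq (V * V)) : nat :=
  match s with
  | [::] => 0
  | e :: s' => (~~ has (shares e) pre) + ndisc_aux (rcons pre e) s'
  end.

Definition ndisc (o : seq (V * V)) : nat := ndisc_aux [::] o.
End Defs.

(* Main.v *)
Require Import Defs.
From mathcomp Require Import all_boot.
From mathcomp Require Import zify.

Section Aux.
Variable V : eqType.

Lemma ndisc_cat (pre s t : seq (V * V)) :
  ndisc_aux pre s <= ndisc_aux pre (s ++ t).
Proof.
elim: s pre => [|e s IH] pre //=.
by rewrite leq_add2l IH.
Qed.

Lemma ndisc_match (M pre : seq (V * V)) :
  (forall e p, e \in M -> p \in pre -> ~~ shares e p) ->
  pairwise (fun f g => ~~ shares g f) M -> size M <= ndisc_aux pre M.
Proof.
elim: M pre => [|e M IH] pre //= Hpre /andP[Hall Hpw].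
have -> : has (shares e) pre = false.
  apply/negP => /hasP [p Hp Hs].
  by move: (Hpre e p (mem_head _ _) Hp); rewrite Hs.
rewrite /= add1n ltnS; apply: IH => // e' p He'.
rewrite mem_rcons inE => /orP [/eqP -> | Hp].
  exact: (allP Hall).
by apply: Hpre => //; rewrite inE He' orbT.
Qed.

Lemma shares_sym (e f : V * V) : shares e f = shares f e.
Proof.
rewrite /shares (eq_sym e.1 f.1) (eq_sym e.1 f.2) (eq_sym e.2 f.1) (eq_sym e.2 f.2).
by case: (f.1 == e.1); case: (f.2 == e.1); case: (f.1 == e.2); case: (f.2 == e.2).
Qed.

Definition inc (v : V) (f : V * V) : bool := (v == f.1) || (v == f.2).
Definition other (v : V) (f : V * V) : V := if f.1 == v then f.2 else f.1.

Lemma other_same v f g : inc v f -> inc v g -> other v f = other v g ->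
  same_edge f g.
Proof.
case: f => a b; case: g => c c'; rewrite /inc /other /same_edge /= => Hf Hg.
case: (eqVneq a v) Hf => [->|Hav] Hf; case: (eqVneq c v) Hg => [->|Hcv] Hg /= Heq; subst.
all: rewrite ?xpair_eqE ?eqxx /= ?orbT //.
all: move: Hf Hg; rewrite ?eqxx /= ?orbT //.
all: move=> H1 H2; rewrite ?(eqP H1) ?(eqP H2) ?eqxx ?andbT ?orbT //.
all: by rewrite -(eqP H1) -(eqP H2) eqxx.
Qed.

Lemma uniq_other v (L : seq (V * V)) :
  pairwise (fun e f => ~~ same_edge e f) L ->
  uniq (map (other v) (filter (inc v) L)).
Proof.
elim: L => [|f L IH] //= /andP [Hall Hpw].
case Hf: (inc v f) => /=; last exact: IH.
rewrite IH // andbT; apply/mapP => [[g]].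
rewrite mem_filter => /andP [Hg HgL] Heq.
by move: (allP Hall g HgL); rewrite (other_same _ _ _ Hf Hg Heq).
Qed.

Variables (adj : rel V) (d : nat).
Hypothesis Hsym : symmetric adj.
Hypothesis Hdeg : forall (v : V) (s : seq V), uniq s -> all (adj v) s -> size s <= d.

Lemma count_inc v (L : seq (V * V)) :
  all (fun e => adj e.1 e.2) L ->
  pairwise (fun e f => ~~ same_edge e f) L -> count (inc v) L <= d.
Proof.
move=> HL Hpw; rewrite -size_filter -(size_map (other v)).
apply: (Hdeg v); first exact: uniq_other.
apply/allP => x /mapP [f]; rewrite mem_filter => /andP [Hi Hf] ->.
have Hadj := allP HL f Hf; rewrite /other; move: Hi; rewrite /inc.
case: (eqVneq f.1 v) Hadj => [E|Ne] Hadj /=; first by move=> _; rewrite -E.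
by move=> /eqP E; rewrite E Hsym.
Qed.

Lemma count_shares e (L : seq (V * V)) :
  e \in L ->
  all (fun e => adj e.1 e.2) L ->
  pairwise (fun e f => ~~ same_edge e f) L -> count (shares e) L < 2 * d.
Proof.
move=> He HL Hpw.
have H1 := count_inc e.1 L HL Hpw.
have H2 := count_inc e.2 L HL Hpw.
have Hu := count_predUI (inc e.1) (inc e.2) L.
have Hi : 0 < count (predI (inc e.1) (inc e.2)) L.
  rewrite -has_count; apply/hasP; exists e => //=.
  by rewrite /inc !eqxx /= orbT.
have -> : count (shares e) L = count (predU (inc e.1) (inc e.2)) L.
  by apply: eq_count => f; rewrite /shares /inc /= !orbA.
lia.
Qed.

Lemma greedy n (E : seq (V * V)) : size E <= n ->
  all (fun e => adj e.1 e.2) E ->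
  pairwise (fun e f => ~~ same_edge e f) E ->
  exists M R, [/\ perm_eq (M ++ R) E,
     pairwise (fun f g => ~~ shares g f) M & size E <= 2 * d * size M].
Proof.
elim: n E => [|n IH] [|e E'] //=; try by move=> *; exists [::], [::].
rewrite ltnS => Hs /andP [He HE'] /andP [Hall Hpw].
set T := filter (predC (shares e)) E'.
set S := filter (shares e) E'.
have HT1 : size T <= n by rewrite size_filter (leq_trans (count_size _ _)).
have HT2 : all (fun e => adj e.1 e.2) T.
  apply/allP => x; rewrite mem_filter => /andP [_ /(allP HE')] //.
have HT3 : pairwise (fun e f => ~~ same_edge e f) T.
  by rewrite pairwise_filter.
have [M [R [HP HM Hsz]]] := IH T HT1 HT2 HT3.
exists (e :: M), (S ++ R); split.
- rewrite cat_cons perm_cons.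
  rewrite perm_catCA perm_sym -(perm_filterC (shares e) E') perm_sym.
  by rewrite perm_cat2l.
- rewrite /= HM andbT; apply/allP => g Hg.
  have : g \in T by rewrite -(perm_mem HP) mem_cat Hg.
  by rewrite mem_filter shares_sym => /andP [].
-   have Hc' : count (shares e) (e :: E') < 2 * d.
    apply: (count_shares e (e :: E')); first exact: mem_head.
    by rewrite /= He HE'.
    by rewrite /= Hall Hpw.
  have Hee : shares e e by rewrite /shares eqxx.
  move: Hc'; rewrite /= Hee => Hc'.
  have : size E' = count (shares e) E' + size T.
    by rewrite /T size_filter count_predC.
  move: Hsz Hc' => /=; lia.
Qed.
End Aux.

Theorem lemma6p11 (V : eqType) (adj : rel V) (d : nat)
  (Hsym : symmetric adj) (Hirr : irreflexive adj)
  (* every vertex has at most d neighbours *)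
  (Hdeg : forall (v : V) (s : seq V), uniq s -> all (adj v) s -> size s <= d)
  (* some vertex has exactly d neighbours: maximum degree is d *)
  (Hmax : exists (v : V) (s : seq V), [/\ uniq s, all (adj v) s & size s = d])
  (Hd : 1 <= d)
  (* E: a finite set of edges of G, listed without repetition *)
  (E : seq (V * V))
  (HE : all (fun e => adj e.1 e.2) E)
  (HEu : pairwise (fun e f => ~~ same_edge e f) E) :
  exists o : seq (V * V), perm_eq o E /\ size E %/ (2 * d) <= ndisc o.
Proof.
have [M [R [HP HM Hsz]]] := @greedy V adj d Hsym Hdeg (size E) E (leqnn (size E)) HE HEu.
exists (M ++ R); split => //.
apply: (leq_trans _ (ndisc_cat _ _ _ _)).
have Hm : size M <= ndisc_aux [::] M.
  by apply: ndisc_match => // e p _; rewrite in_nil.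
apply: (leq_trans _ Hm).
have Hpos : 0 < 2 * d by lia.
rewrite -(mulKn (size M) Hpos).
exact: leq_div2r.
Qed.
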